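(* Let $|q|<1$ and let $x,y,s,t$ be complex numbers with $|t|,|s|,|xt|,|xs|<1$. Then $$\sum_{n=0}^\infty\sum_{m=0}^\infty h_{n+m}(x,y|q)\frac{t^n}{(q;q)_n}\frac{s^m}{(q;q)_m}=\frac{(ys;q)_\infty}{(s,xs,xt;q)_\infty}\ {}_2\phi_1\left(\begin{array}{c} y,\ xs\\ ys\end{array}; q,\ t\right).$$
   Context: Throughout $|q|<1$. $(a;q)_n=\prod_{k=0}^{n-1}(1-aq^k)$, $(a;q)_\infty=\prod_{k\ge0}(1-aq^k)$, $(a_1,\dots,a_m;q)_n=\prod_i(a_i;q)_n$ (also for $n=\infty$), ${n\brack k}=\frac{(q;q)_n}{(q;q)_k(q;q)_{n-k}}$, and ${}_2\phi_1\left(\begin{array}{c}a_1,a_2\\ b_1\end{array};q,z\right)=\sum_{n\ge0}\frac{(a_1,a_2;q)_n}{(q,b_1;q)_n}z^n$. $P_n(x,y)=(x-y)(x-qy)\cdots(x-q^{n-1}y)$ with $P_0=1$, and $h_n(x,y|q)=\sum_{k=0}^n{n\brack k}P_k(x,y)$. *)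

(* Defs.v *)
From Stdlib Require Import Reals.
From Coquelicot Require Import Coquelicot.
Open Scope C_scope.

Fixpoint qpoch (a q : C) (n : nat) : C :=
  match n with
  | O => 1
  | S n' => qpoch a q n' * (1 - a * Cpow q n')
  end.

Definition qpoch_inf (a q : C) : C :=
  @lim (CompleteNormedModule.CompleteSpace C_AbsRing C_CompleteNormedModule) (filtermap (fun n => qpoch a q n) eventually).

Definition qbinom (q : C) (n k : nat) : C :=
  qpoch q q n / (qpoch q q k * qpoch q q (n - k)).

Fixpoint Pn (x y q : C) (n : nat) : C :=
  match n with
  | O => 1
  | S n' => Pn x y q n' * (x - Cpow q n' * y)
  end.

Definition hn (x y q : C) (n : nat) : C :=
  sum_n (fun k => qbinom q n k * Pn x y q k) n.

Definition CSeries (a : nat -> C) : C :=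
  @lim (CompleteNormedModule.CompleteSpace C_AbsRing C_CompleteNormedModule)
       (filtermap (fun N => sum_n a N) eventually).

Definition phi21 (a1 a2 b1 q z : C) : C :=
  CSeries (fun n => (qpoch a1 q n * qpoch a2 q n)
                   / (qpoch q q n * qpoch b1 q n) * Cpow z n).

(* Main.v *)
Require Import Defs.
From Stdlib Require Import Reals.
From Coquelicot Require Import Coquelicot.
From Stdlib Require Import Lra Lia Psatz.
Open Scope C_scope.


Lemma Cmod_lt1_nz w : (Cmod w < 1)%R -> 1 - w <> 0.
Proof.
  intros H E. assert (w = 1) by (transitivity (1 - (1 - w)); [ring| rewrite E; ring]).
  subst. rewrite Cmod_1 in H. lra.
Qed.

Lemma Cmod_pow_le1 q k : (Cmod q < 1)%R -> (Cmod (q ^ k) <= 1)%R.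
Proof.
  intros H. rewrite Cmod_pow. induction k; simpl. lra.
  pose proof (Cmod_ge_0 q). pose proof (pow_le (Cmod q) k H0). nra.
Qed.

Lemma Cmod_pow_le q k : (Cmod q < 1)%R -> (Cmod (q ^ S k) <= Cmod (q ^ k))%R.
Proof.
  intros H. rewrite !Cmod_pow. simpl. pose proof (Cmod_ge_0 q). pose proof (pow_le (Cmod q) k H0). nra.
Qed.

Lemma qpoch_nz a q n : (forall k, 1 - a * q ^ k <> 0) -> qpoch a q n <> 0.
Proof.
  intros H. induction n; simpl. intro E. apply C1_nz. exact E.
  apply Cmult_neq_0; auto.
Qed.

Lemma qpoch_nz_small a q n : (Cmod q < 1)%R -> (Cmod a < 1)%R -> qpoch a q n <> 0.
Proof.
  intros Hq Ha. apply qpoch_nz. intros k. apply Cmod_lt1_nz.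
  rewrite Cmod_mult. pose proof (Cmod_pow_le1 q k Hq). pose proof (Cmod_ge_0 a). pose proof (Cmod_ge_0 (q^k)). nra.
Qed.

Lemma qqpoch_nz q n : (Cmod q < 1)%R -> qpoch q q n <> 0.
Proof. intros Hq. apply qpoch_nz_small; auto. Qed.

Lemma qpoch_add a q k n : qpoch a q (k + n) = qpoch a q k * qpoch (a * q ^ k) q n.
Proof.
  induction n; simpl. rewrite Nat.add_0_r. ring.
  rewrite Nat.add_succ_r. simpl. rewrite IHn. rewrite Cpow_add_r. ring.
Qed.

Lemma qpoch_0 q n : qpoch 0 q n = 1.
Proof. induction n; simpl; auto. rewrite IHn. ring. Qed.

Lemma Pn_1 y q j : Pn 1 y q j = qpoch y q j.
Proof. induction j; simpl; auto. rewrite IHj. ring. Qed.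

Lemma Pn_scale x y c q j : Pn (x * c) (y * c) q j = c ^ j * Pn x y q j.
Proof. induction j; simpl. ring. rewrite IHj. ring. Qed.

Definition cc (x y q : C) (j : nat) : C := Pn x y q j / qpoch q q j.
Definition dd (q : C) (i : nat) : C := / qpoch q q i.

Lemma cc_1_0 q i : cc 1 0 q i = dd q i.
Proof. unfold cc, dd. rewrite Pn_1, qpoch_0. unfold Cdiv. ring. Qed.

Lemma cc_scale x y c q j : cc (x * c) (y * c) q j = c ^ j * cc x y q j.
Proof. unfold cc. rewrite Pn_scale. unfold Cdiv. ring. Qed.

Lemma cc_S x y q j : (Cmod q < 1)%R ->
  cc x y q (S j) * (1 - q * q ^ j) = cc x y q j * (x - q ^ j * y).
Proof.
  intros Hq. unfold cc. simpl.
  assert (H1 := qqpoch_nz q j Hq).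
  assert (H2 : 1 - q * q ^ j <> 0). { apply Cmod_lt1_nz. rewrite <- Cpow_S. rewrite Cmod_pow. 
    apply pow_lt_1_compat; [split; [apply Cmod_ge_0|auto]|lia]. }
  field. auto.
Qed.

Lemma cc_0 x y q : cc x y q 0 = 1.
Proof. unfold cc. simpl. field. Qed.


Lemma plusC (x y : C) : plus x y = x + y. Proof. reflexivity. Qed.
Lemma multC (x y : C) : mult x y = x * y. Proof. reflexivity. Qed.

Lemma sumC_Sn (a : nat -> C) n : @eq C (sum_n a (S n)) (sum_n a n + a (S n)).
Proof. rewrite sum_Sn. reflexivity. Qed.

Lemma sumC_0 (a : nat -> C) : @eq C (sum_n a 0) (a O).
Proof. apply sum_O. Qed.

Lemma sumC_shift (a : nat -> C) n : @eq C (sum_n a (S n)) (a O + sum_n (fun k => a (S k)) n).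
Proof.
  induction n. rewrite sumC_Sn, !sumC_0. reflexivity.
  rewrite sumC_Sn, IHn, sumC_Sn. ring.
Qed.

Lemma sumC_scal_l c (a : nat -> C) n : @eq C (c * sum_n a n) (sum_n (fun k => c * a k) n).
Proof.
  induction n. rewrite !sumC_0. ring. rewrite !sumC_Sn, <- IHn. ring.
Qed.

Lemma sumC_plus (a b : nat -> C) n : @eq C (sum_n a n + sum_n b n) (sum_n (fun k => a k + b k) n).
Proof.
  induction n. rewrite !sumC_0. ring. rewrite !sumC_Sn, <- IHn. ring.
Qed.

Lemma sumC_ext_loc (a b : nat -> C) n : (forall k, (k <= n)%nat -> a k = b k) -> @eq C (sum_n a n) (sum_n b n).
Proof. apply sum_n_ext_loc. Qed.

Definition gg (x y q : C) (m : nat) : C := sum_n (fun j => cc x y q j * dd q (m - j)) m.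

Lemma hn_gg x y q m : (Cmod q < 1)%R -> hn x y q m = qpoch q q m * gg x y q m.
Proof.
  intros Hq. unfold hn, gg. rewrite sumC_scal_l. apply sumC_ext_loc. intros k Hk.
  unfold qbinom, cc, dd. 
  assert (H1 := qqpoch_nz q k Hq). assert (H2 := qqpoch_nz q (m-k) Hq).
  field. auto.
Qed.

Lemma dd_S q i : (Cmod q < 1)%R -> (1 - q * q ^ i) * dd q (S i) = dd q i.
Proof.
  intros Hq. unfold dd. simpl.
  assert (H1 := qqpoch_nz q i Hq).
  assert (H2 : 1 - q * q ^ i <> 0). { apply Cmod_lt1_nz. rewrite <- Cpow_S. rewrite Cmod_pow. 
    apply pow_lt_1_compat; [split; [apply Cmod_ge_0|auto]|lia]. }
  field. auto.
Qed.

Lemma gg_rec X Y q m : (Cmod q < 1)%R ->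
  (1 - q * q ^ m) * gg X Y q (S m) = X * gg X Y q m + (1 - Y) * gg (X * q) (Y * q) q m.
Proof.
  intros Hq. unfold gg. rewrite sumC_scal_l.
  set (G1 := fun j => (1 - q ^ j) * (cc X Y q j * dd q (S m - j))).
  set (G2 := fun j => q ^ j * (1 - q ^ (S m - j)) * (cc X Y q j * dd q (S m - j))).
  transitivity (sum_n G1 (S m) + sum_n G2 (S m)).
  { rewrite sumC_plus. apply sumC_ext_loc. intros k Hk. unfold G1, G2.
    change (q * q ^ m) with (q ^ S m).
    replace (q ^ S m) with (q ^ k * q ^ (S m - k)) by (rewrite <- Cpow_add_r; f_equal; lia). ring. }
  rewrite sumC_shift with (a := G1). rewrite sumC_Sn with (a := G2).
  assert (E1 : G1 O = 0) by (unfold G1; simpl; ring).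
  assert (E2 : G2 (S m) = 0) by (unfold G2; rewrite Nat.sub_diag; simpl; ring).
  rewrite E1, E2.
  rewrite !sumC_scal_l, sumC_plus.
  transitivity (sum_n G1 O + 0 + sum_n (fun k => G1 (S k)) m + sum_n G2 m); [ | ].
  { rewrite sumC_0, E1. ring. }
  rewrite sumC_0, E1.
  replace (0 + 0 + sum_n (fun k : nat => G1 (S k)) m + sum_n G2 m) with
     (sum_n (fun k : nat => G1 (S k)) m + sum_n G2 m) by ring.
  rewrite sumC_plus. apply sumC_ext_loc. intros k Hk. unfold G1, G2.
  replace (S m - S k)%nat with (m - k)%nat by lia.
  replace (S m - k)%nat with (S (m - k)) by lia.
  rewrite cc_scale.
  assert (HS := cc_S X Y q k Hq). assert (HD := dd_S q (m-k) Hq).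
  replace (q ^ S (m - k)) with (q * q ^ (m - k)) by reflexivity.
  replace (q ^ S k) with (q * q ^ k) by reflexivity.
  transitivity ((cc X Y q (S k) * (1 - q * q ^ k)) * dd q (m - k) + q ^ k * cc X Y q k * ((1 - q * q ^ (m - k)) * dd q (S (m - k)))).
  { ring. }
  rewrite HS, HD. ring.
Qed.

Lemma nz1 q n : (Cmod q < 1)%R -> 1 - q * q ^ n <> 0.
Proof.
  intros Hq. apply Cmod_lt1_nz. rewrite <- Cpow_S. rewrite Cmod_pow.
  apply pow_lt_1_compat; [split; [apply Cmod_ge_0|auto]|lia].
Qed.

Lemma Cmult_reg_l (a b c : C) : a <> 0 -> a * b = a * c -> b = c.
Proof.
  intros Ha E. transitivity (/ a * (a * b)). field. auto. rewrite E. field. auto.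
Qed.

Definition BB (x y q : C) (n k : nat) : C :=
  qpoch y q k * x ^ (n - k) / (qpoch q q k * qpoch q q (n - k)).

Lemma B_step_0 x y q n : (Cmod q < 1)%R ->
  (1 - q * q ^ n) * BB x y q (S n) 0 = BB x y q n 0 * (x * q ^ 0).
Proof.
  intros Hq. unfold BB. rewrite !Nat.sub_0_r. simpl.
  assert (H1 := qqpoch_nz q n Hq). assert (H2 := nz1 q n Hq). field. auto.
Qed.

Lemma B_step_mid x y q n k : (Cmod q < 1)%R -> (k < n)%nat ->
  (1 - q * q ^ n) * BB x y q (S n) (S k) = BB x y q n (S k) * (x * q ^ (S k)) + BB x y q n k * (1 - y * q ^ k).
Proof.
  intros Hq Hk. destruct (Nat.le_exists_sub (S k) n Hk) as [r [Hr _]].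
  rewrite Nat.add_comm in Hr. subst n. unfold BB.
  replace (S (S k + r) - S k)%nat with (S r) by lia.
  replace (S k + r - S k)%nat with r by lia.
  replace (S k + r - k)%nat with (S r) by lia.
  simpl qpoch. rewrite !Cpow_S. rewrite Cpow_add_r. simpl.
  assert (H1 := qqpoch_nz q k Hq). assert (H2 := nz1 q k Hq).
  assert (H3 := qqpoch_nz q r Hq). assert (H4 := nz1 q r Hq).
  field. auto.
Qed.

Lemma B_step_last x y q n : (Cmod q < 1)%R ->
  (1 - q * q ^ n) * BB x y q (S n) (S n) = BB x y q n n * (1 - y * q ^ n).
Proof.
  intros Hq. unfold BB. rewrite !Nat.sub_diag. simpl.
  assert (H1 := qqpoch_nz q n Hq). assert (H2 := nz1 q n Hq). field. auto.
Qed.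

Lemma KEY x y q n (g : nat -> C) : (Cmod q < 1)%R ->
  (1 - q * q ^ n) * sum_n (fun k => BB x y q (S n) k * g k) (S n)
  = sum_n (fun k => BB x y q n k * (x * q ^ k * g k + (1 - y * q ^ k) * g (S k))) n.
Proof.
  intros Hq.
  set (H := fun k => match k return C with O => 0 | S k' => BB x y q n k' * (1 - y * q ^ k') * g (S k') end).
  set (A := fun k => BB x y q n k * (x * q ^ k) * g k).
  transitivity (sum_n A n + sum_n (fun k => H (S k)) n).
  2:{ rewrite sumC_plus. apply sumC_ext_loc. intros k Hk. unfold A, H. ring. }
  assert (E : @eq C (sum_n (fun k => H (S k)) n) (sum_n H n + H (S n))).
  { rewrite <- sumC_Sn. rewrite sumC_shift. change (H O) with (RtoC 0). rewrite Cplus_0_l. reflexivity. }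
  rewrite E. rewrite sumC_Sn.
  rewrite Cmult_plus_distr_l, sumC_scal_l, Cplus_assoc, sumC_plus.
  f_equal.
  - apply sumC_ext_loc. intros k Hk. unfold A, H. destruct k.
    + transitivity ((1 - q * q ^ n) * BB x y q (S n) 0 * g O). ring. rewrite B_step_0 by auto. ring.
    + transitivity ((1 - q * q ^ n) * BB x y q (S n) (S k) * g (S k)). ring.
      rewrite B_step_mid by (auto; lia). ring.
  - unfold H. transitivity ((1 - q * q ^ n) * BB x y q (S n) (S n) * g (S n)). ring.
    rewrite B_step_last by auto. ring.
Qed.

Lemma FI x y q n : (Cmod q < 1)%R -> forall m,
  hn x y q (n + m) / (qpoch q q n * qpoch q q m)
  = sum_n (fun k => BB x y q n k * gg (x * q ^ k) (y * q ^ k) q m) n.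
Proof.
  intros Hq. induction n; intros m.
  - rewrite sumC_0. simpl. rewrite hn_gg by auto. unfold BB. simpl.
    rewrite !Cmult_1_r. assert (H1 := qqpoch_nz q m Hq). field. auto.
  - assert (IH := IHn (S m)).
    assert (Hnz := nz1 q n Hq).
    apply (Cmult_reg_l (1 - q * q ^ n)); auto.  
    rewrite KEY by auto.
    replace (S n + m)%nat with (n + S m)%nat by lia.
    transitivity (hn x y q (n + S m) / (qpoch q q n * qpoch q q (S m)) * (1 - q * q ^ m)).
    { simpl qpoch. assert (H1 := qqpoch_nz q m Hq). assert (H2 := qqpoch_nz q n Hq).
      assert (H3 := nz1 q m Hq). field. auto. }
    rewrite IH. rewrite Cmult_comm, sumC_scal_l. apply sumC_ext_loc. intros k Hk.
    transitivity (BB x y q n k * ((1 - q * q ^ m) * gg (x * q ^ k) (y * q ^ k) q (S m))). ring.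
    rewrite gg_rec by auto. 
    replace (x * q ^ k * q) with (x * q ^ S k) by (simpl; ring).
    replace (y * q ^ k * q) with (y * q ^ S k) by (simpl; ring). ring.
Qed.


Definition Clim (u:nat->C) (L:C) := forall eps:R, (0<eps)%R -> exists N, forall n, (N<=n)%nat -> (Cmod (u n - L) < eps)%R.
Definition Rlim (u:nat->R) (L:R) := forall eps:R, (0<eps)%R -> exists N, forall n, (N<=n)%nat -> (Rabs (u n - L) < eps)%R.

Lemma Clim_filterlim u L : Clim u L <-> filterlim u eventually (locally L).
Proof.
  rewrite (filterlim_locally_ball_norm (K:=C_AbsRing)). split.
  - intros H eps. destruct (H eps (cond_pos eps)) as [N HN]. exists N. intros n Hn. apply HN; auto.
  - intros H eps Heps. destruct (H (mkposreal eps Heps)) as [N HN]. exists N. intros n Hn. apply HN; auto.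
Qed.

Lemma Rlim_filterlim u L : Rlim u L <-> filterlim u eventually (locally L).
Proof.
  rewrite (filterlim_locally_ball_norm (K:=R_AbsRing)). split.
  - intros H eps. destruct (H eps (cond_pos eps)) as [N HN]. exists N. intros n Hn. apply HN; auto.
  - intros H eps Heps. destruct (H (mkposreal eps Heps)) as [N HN]. exists N. intros n Hn. apply HN; auto.
Qed.

Lemma is_series_Clim (a:nat->C) l : is_series a l <-> Clim (sum_n a) l.
Proof. rewrite Clim_filterlim. reflexivity. Qed.

Lemma is_series_Rlim (a:nat->R) l : is_series a l <-> Rlim (sum_n a) l.
Proof. rewrite Rlim_filterlim. reflexivity. Qed.

Lemma Clim_unique u L1 L2 : Clim u L1 -> Clim u L2 -> L1 = L2.
Proof.
  rewrite !Clim_filterlim. intros H1 H2.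
  exact (filterlim_locally_unique (K:=C_AbsRing) (F:=eventually) u L1 L2 H1 H2).
Qed.

Lemma lim_Clim u L : Clim u L ->
  @lim (CompleteNormedModule.CompleteSpace C_AbsRing C_CompleteNormedModule) (filtermap u eventually) = L.
Proof.
  intros H. pose proof H as H'. rewrite Clim_filterlim in H'.
  set (F := filtermap u eventually).
  assert (PF : ProperFilter F) by (apply filtermap_proper_filter; apply eventually_filter).
  assert (CF : cauchy F).
  { intros eps. exists L. pose proof (proj1 (filterlim_locally u L) H') as H3. apply H3. }
  pose proof (@complete_cauchy (CompleteNormedModule.CompleteSpace C_AbsRing C_CompleteNormedModule) F PF CF) as HC.
  assert (Hl : filterlim u eventually (locally (@lim (CompleteNormedModule.CompleteSpace C_AbsRing C_CompleteNormedModule) F))).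
  { apply filterlim_locally. intros eps. apply HC. }
  exact (filterlim_locally_unique (K:=C_AbsRing) (F:=eventually) u _ _ Hl H').
Qed.

Lemma Clim_const c : Clim (fun _ => c) c.
Proof. intros eps He. exists O. intros n _. replace (c - c) with (RtoC 0) by ring. rewrite Cmod_0. auto. Qed.

Lemma Clim_mult u v L M : Clim u L -> Clim v M -> Clim (fun n => u n * v n) (L * M).
Proof.
  intros Hu Hv eps He.
  pose proof (Cmod_ge_0 L). pose proof (Cmod_ge_0 M).
  set (d1 := Rmin 1 (eps / (2 * (Cmod M + 1)))).
  set (d2 := (eps / (2 * (Cmod L + 1)))%R).
  assert (Hd1 : (0 < d1)%R). { unfold d1. apply Rmin_pos. lra. apply Rdiv_lt_0_compat; lra. }
  assert (Hd2 : (0 < d2)%R). { unfold d2. apply Rdiv_lt_0_compat; lra. }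
  destruct (Hu d1 Hd1) as [N1 H1]. destruct (Hv d2 Hd2) as [N2 H2].
  exists (max N1 N2). intros n Hn. specialize (H1 n ltac:(lia)). specialize (H2 n ltac:(lia)).
  replace (u n * v n - L * M) with (u n * (v n - M) + M * (u n - L)) by ring.
  eapply Rle_lt_trans. apply Cmod_triangle. rewrite !Cmod_mult.
  assert (Hu1 : (Cmod (u n) <= Cmod L + 1)%R).
  { replace (u n) with (L + (u n - L)) by ring. eapply Rle_trans. apply Cmod_triangle.
    assert (d1 <= 1)%R by apply Rmin_l. lra. }
  assert (E1 : (Cmod M * d1 <= eps / 2)%R).
  { assert (d1 <= eps / (2 * (Cmod M + 1)))%R by apply Rmin_r.
    apply Rle_trans with (Cmod M * (eps / (2 * (Cmod M + 1))))%R. apply Rmult_le_compat_l; lra.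
    apply Rle_trans with ((Cmod M + 1) * (eps / (2 * (Cmod M + 1))))%R. apply Rmult_le_compat_r.
    apply Rlt_le, Rdiv_lt_0_compat; lra. lra. right. field. lra. }
  assert (E2 : ((Cmod L + 1) * d2 = eps / 2)%R) by (unfold d2; field; lra).
  pose proof (Cmod_ge_0 (v n - M)). pose proof (Cmod_ge_0 (u n - L)). pose proof (Cmod_ge_0 (u n)).
  assert (Cmod (u n) * Cmod (v n - M) <= (Cmod L + 1) * d2)%R.
  { apply Rle_trans with ((Cmod L + 1) * Cmod (v n - M))%R. apply Rmult_le_compat_r; lra.
    apply Rmult_le_compat_l; lra. }
  assert (Cmod M * Cmod (u n - L) <= Cmod M * d1)%R by (apply Rmult_le_compat_l; lra).
  assert (Cmod (u n) * Cmod (v n - M) < eps/2 \/ Cmod M * Cmod (u n - L) < eps / 2)%R.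
  { destruct (Req_dec (Cmod (u n)) 0) as [Z|Z]. left. rewrite Z. lra.
    left. apply Rlt_le_trans with (Cmod (u n) * d2)%R. apply Rmult_lt_compat_l; lra.
    apply Rle_trans with ((Cmod L + 1) * d2)%R. apply Rmult_le_compat_r; lra. lra. }
  lra.
Qed.

Lemma Clim_ext_ev u v L : (exists N, forall n, (N <= n)%nat -> u n = v n) -> Clim u L -> Clim v L.
Proof.
  intros [N HN] H eps He. destruct (H eps He) as [N2 H2]. exists (max N N2). intros n Hn.
  rewrite <- HN by lia. apply H2. lia.
Qed.

Lemma Clim_shift u L k : Clim u L -> Clim (fun n => u (k + n)%nat) L.
Proof.
  intros H eps He. destruct (H eps He) as [N HN]. exists N. intros n Hn. apply HN. lia.
Qed.

Lemma Clim_inv1 u : Clim u 1 -> Clim (fun n => / u n) 1.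
Proof.
  intros H eps He. destruct (H (Rmin (eps/2) (1/2)) ltac:(apply Rmin_pos; lra)) as [N HN].
  exists N. intros n Hn. specialize (HN n Hn).
  assert (Hm1 : (Rmin (eps/2) (1/2) <= eps/2)%R) by apply Rmin_l.
  assert (Hm2 : (Rmin (eps/2) (1/2) <= 1/2)%R) by apply Rmin_r.
  assert (Hu : (Cmod (u n) >= 1/2)%R).
  { assert (T := Cmod_triangle (u n) (1 - u n)). replace (u n + (1 - u n)) with (RtoC 1) in T by ring.
    rewrite Cmod_1 in T. replace (1 - u n) with (-(u n - 1)) in T by ring. rewrite Cmod_opp in T. lra. }
  assert (Hnz : u n <> 0). { intro E. rewrite E, Cmod_0 in Hu. lra. }
  replace (/ u n - 1) with (-(u n - 1) / u n) by (field; auto).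
  rewrite Cmod_div by auto. rewrite Cmod_opp.
  apply (Rmult_lt_reg_r (Cmod (u n))). lra. unfold Rdiv. rewrite Rmult_assoc, Rinv_l by lra.
  pose proof (Cmod_ge_0 (u n - 1)). nra.
Qed.

Lemma Clim_bound u L (K r : R) : (0 <= r < 1)%R -> (forall n, Cmod (u n - L) <= K * r ^ n)%R -> Clim u L.
Proof.
  intros Hr Hb eps He.
  assert (HK : (0 <= K)%R). { specialize (Hb O). simpl in Hb. pose proof (Cmod_ge_0 (u O - L)). lra. }
  destruct (pow_lt_1_zero r ltac:(rewrite Rabs_pos_eq; lra) (eps / (K + 1))) as [N HN].
  { apply Rdiv_lt_0_compat; lra. }
  exists N. intros n Hn. specialize (HN n Hn). rewrite Rabs_pos_eq in HN by (apply pow_le; lra).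
  eapply Rle_lt_trans. apply Hb.
  apply (Rmult_lt_compat_l (K+1)) in HN; [|lra].
  replace ((K + 1) * (eps / (K + 1)))%R with eps in HN by (field; lra).
  pose proof (pow_le r n ltac:(lra)). nra.
Qed.

Lemma Clim_scal c u L : Clim u L -> Clim (fun n => c * u n) (c * L).
Proof. intros H. apply Clim_mult; auto. apply Clim_const. Qed.


Lemma RATIO (al : nat -> R) (rho : R) N : (forall j, 0 <= al j)%R -> (0 <= rho < 1)%R ->
  (forall j, (N <= j)%nat -> al (S j) <= rho * al j)%R -> ex_series al.
Proof.
  intros Hpos Hr Hs.
  assert (Hb : forall k, (al (N + k)%nat <= al N * rho ^ k)%R).
  { induction k. rewrite Nat.add_0_r. simpl. lra.
    rewrite Nat.add_succ_r. eapply Rle_trans. apply Hs. lia. simpl.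
    pose proof (Hpos (N+k)%nat). nra. }
  apply (ex_series_incr_n al N).
  apply (ex_series_le (K:=R_AbsRing) (fun k => al (N + k)%nat) (fun k => al N * rho ^ k)%R).
  { intros n. change (norm (al (N+n)%nat)) with (Rabs (al (N+n)%nat)). rewrite Rabs_pos_eq by auto. apply Hb. }
  apply (ex_series_scal (K:=R_AbsRing) (al N) (fun k => rho ^ k)%R).
  apply ex_series_geom. rewrite Rabs_pos_eq; lra.
Qed.

Lemma Cmod_1_minus w : (1 - Cmod w <= Cmod (1 - w))%R.
Proof.
  assert (T := Cmod_triangle (1 - w) w). replace (1 - w + w) with (RtoC 1) in T by ring.
  rewrite Cmod_1 in T. lra.
Qed.

Lemma cc_ratio X Y q z j : (Cmod q < 1)%R ->
  cc X Y q (S j) * z ^ S j = cc X Y q j * z ^ j * ((X - q ^ j * Y) * z / (1 - q * q ^ j)).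
Proof.
  intros Hq. assert (H := cc_S X Y q j Hq). assert (Hn := nz1 q j Hq).
  apply (Cmult_reg_l (1 - q * q ^ j)); auto.
  transitivity (cc X Y q (S j) * (1 - q * q ^ j) * z ^ S j). ring.
  rewrite H. simpl. field. auto.
Qed.

Lemma ABS X Y q z : (Cmod q < 1)%R -> (Cmod (X * z) < 1)%R ->
  ex_series (fun j => Cmod (cc X Y q j * z ^ j)).
Proof.
  intros Hq Hxz. rewrite Cmod_mult in Hxz.
  pose proof (Cmod_ge_0 X). pose proof (Cmod_ge_0 Y). pose proof (Cmod_ge_0 z).
  assert (Ha : (0 <= Cmod X * Cmod z)%R) by nra. assert (Hb : (0 <= Cmod Y * Cmod z)%R) by nra.
  remember (Cmod X * Cmod z)%R as a eqn:Ea. remember (Cmod Y * Cmod z)%R as b eqn:Eb.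
  remember ((1 + a) / 2)%R as rho eqn:Er.
  assert (Hr1 : (a < rho < 1)%R) by (subst rho; lra).
  remember ((rho - a) / (b + rho + 1))%R as delta eqn:Edl.
  assert (Hd : (0 < delta)%R). { subst delta. apply Rdiv_lt_0_compat; lra. }
  assert (Hd2 : (delta * (b + rho + 1) = rho - a)%R). { subst delta. field. lra. }
  destruct (pow_lt_1_zero (Cmod q) ltac:(rewrite Rabs_pos_eq; [lra|apply Cmod_ge_0]) delta Hd) as [N HN].
  apply (RATIO _ rho N).
  { intros; apply Cmod_ge_0. }
  { lra. }
  intros j Hj. rewrite cc_ratio by auto. rewrite Cmod_mult. rewrite Rmult_comm.
  apply Rmult_le_compat_r. apply Cmod_ge_0.
  specialize (HN j Hj). rewrite Rabs_pos_eq in HN by (apply pow_le, Cmod_ge_0).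
  remember (Cmod q ^ j)%R as e eqn:Ee.
  assert (He0 : (0 <= e)%R) by (rewrite Ee; apply pow_le, Cmod_ge_0).
  assert (Hnz := nz1 q j Hq).
  rewrite Cmod_div by auto. rewrite Cmod_mult.
  assert (Hden : (1 - e <= Cmod (1 - q * q ^ j))%R).
  { eapply Rle_trans. 2: apply Cmod_1_minus. rewrite <- Cpow_S, Cmod_pow. simpl.
    rewrite Ee. pose proof (Cmod_ge_0 q). assert (Cmod q * Cmod q ^ j <= Cmod q ^ j)%R. nra. lra. }
  assert (Hnum : (Cmod (X - q ^ j * Y) <= Cmod X + e * Cmod Y)%R).
  { unfold Cminus. eapply Rle_trans. apply Cmod_triangle. rewrite Cmod_opp, Cmod_mult, Cmod_pow. rewrite <- Ee. lra. }
  assert (Hde1 : (delta * (b + rho) <= rho - a)%R) by nra.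
  assert (Hkey : ((Cmod X + e * Cmod Y) * Cmod z <= rho * (1 - e))%R).
  { replace ((Cmod X + e * Cmod Y) * Cmod z)%R with (a + e * b)%R by (subst a b; ring).
    assert (e * (b + rho) <= delta * (b + rho))%R by (apply Rmult_le_compat_r; lra). nra. }
  assert (Hpos : (0 < 1 - e)%R).
  { assert (delta * (rho + 1) <= rho - a)%R by nra. nra. }
  unfold Rdiv. apply (Rmult_le_reg_r (Cmod (1 - q * q ^ j))). lra.
  rewrite Rmult_assoc, Rinv_l by lra.
  assert (Cmod (X - q ^ j * Y) * Cmod z <= (Cmod X + e * Cmod Y) * Cmod z)%R by (apply Rmult_le_compat_r; lra).
  assert (rho * (1 - e) <= rho * Cmod (1 - q * q ^ j))%R by (apply Rmult_le_compat_l; lra).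
  lra.
Qed.

Lemma sumR_Sn (a : nat -> R) n : sum_n a (S n) = (sum_n a n + a (S n))%R.
Proof. rewrite sum_Sn. reflexivity. Qed.

Lemma NS (a : nat -> C) (b : nat -> R) l L : is_series a l -> (forall j, Cmod (a j) <= b j)%R ->
  is_series b L -> (Cmod l <= L)%R.
Proof.
  intros Ha Hab Hb. rewrite is_series_Clim in Ha. rewrite is_series_Rlim in Hb.
  assert (Hp : forall N, (Cmod (sum_n a N) <= sum_n b N)%R).
  { induction N. rewrite sumC_0, sum_O. auto. rewrite sumC_Sn, sumR_Sn.
    eapply Rle_trans. apply Cmod_triangle. specialize (Hab (S N)). lra. }
  destruct (Rle_lt_dec (Cmod l) L) as [H|H]; auto. exfalso.
  set (eps := ((Cmod l - L) / 2)%R).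
  destruct (Ha eps ltac:(unfold eps; lra)) as [N1 H1]. destruct (Hb eps ltac:(unfold eps; lra)) as [N2 H2].
  specialize (H1 (max N1 N2) ltac:(lia)). specialize (H2 (max N1 N2) ltac:(lia)).
  specialize (Hp (max N1 N2)).
  assert (T := Cmod_triangle (sum_n a (max N1 N2)) (-(sum_n a (max N1 N2) - l))).
  assert (E : @eq C (sum_n a (max N1 N2) + - (sum_n a (max N1 N2) - l)) l) by ring.
  rewrite E in T.
  rewrite Cmod_opp in T. apply Rabs_def2 in H2. unfold eps in *. lra.
Qed.


Lemma isC_plus (a b : nat -> C) la lb : is_series a la -> is_series b lb ->
  is_series (fun n => a n + b n) (la + lb).
Proof. intros Ha Hb. exact (is_series_plus a b la lb Ha Hb). Qed.

Lemma isC_scal c (a : nat -> C) l : is_series a l -> is_series (fun n => c * a n) (c * l).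
Proof. intros Ha. exact (is_series_scal (K:=C_AbsRing) (V:=C_NormedModule) c a l Ha). Qed.

Lemma isC_ext (a b : nat -> C) l : (forall n, a n = b n) -> is_series a l -> is_series b l.
Proof. intros E Ha. exact (is_series_ext a b l E Ha). Qed.

Lemma isC_minus (a b : nat -> C) la lb : is_series a la -> is_series b lb ->
  is_series (fun n => a n - b n) (la - lb).
Proof.
  intros Ha Hb. apply (isC_scal (-1)) in Hb.
  apply (isC_ext _ _ _ (fun n => eq_refl)) in Hb.
  pose proof (isC_plus _ _ _ _ Ha Hb) as H.
  replace (la - lb) with (la + -1 * lb) by ring.
  apply (isC_ext _ _ _ (fun n => ltac:(ring) : a n + -1 * b n = a n - b n)) in H. exact H.
Qed.

Lemma isC_unique (a : nat -> C) l1 l2 : is_series a l1 -> is_series a l2 -> l1 = l2.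
Proof. rewrite !is_series_Clim. apply Clim_unique. Qed.

Lemma isC_incr_1 (a : nat -> C) (l : C) : is_series a l -> is_series (fun k => a (S k)) (l - a O).
Proof.
  intros H. apply is_series_incr_1.
  assert (E : @eq C l (plus (l - a O) (a O))) by (rewrite plusC; ring).
  rewrite E in H. exact H.
Qed.

Lemma exC_abs (a : nat -> C) : ex_series (fun n => Cmod (a n)) -> exists l, is_series a l.
Proof.
  intros H.
  assert (E : ex_series a).
  { apply (ex_series_le (K:=C_AbsRing) (V:=C_CompleteNormedModule) a (fun n => Cmod (a n))).
    intros n. right. reflexivity. exact H. }
  exact E.
Qed.

Lemma CSeries_correct (a : nat -> C) l : is_series a l -> CSeries a = l.
Proof. intros H. unfold CSeries. apply lim_Clim. rewrite <- is_series_Clim. exact H. Qed.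

Definition Fs X Y q w := CSeries (fun j => cc X Y q j * w ^ j).

Lemma F_correct X Y q w : (Cmod q < 1)%R -> (Cmod (X * w) < 1)%R ->
  is_series (fun j => cc X Y q j * w ^ j) (Fs X Y q w).
Proof.
  intros Hq Hw. destruct (exC_abs _ (ABS X Y q w Hq Hw)) as [l Hl].
  unfold Fs. rewrite (CSeries_correct _ l Hl). exact Hl.
Qed.

Lemma Cmod_qz X q z n : (Cmod q < 1)%R -> (Cmod (X * (q ^ n * z)) <= Cmod (X * z))%R.
Proof.
  intros Hq. rewrite !Cmod_mult. pose proof (Cmod_pow_le1 q n Hq).
  pose proof (Cmod_ge_0 X). pose proof (Cmod_ge_0 z). pose proof (Cmod_ge_0 (q^n)).
  assert (E : (Cmod X * (Cmod (q ^ n) * Cmod z) = Cmod (q^n) * (Cmod X * Cmod z))%R) by ring.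
  rewrite E. rewrite <- (Rmult_1_l (Cmod X * Cmod z)) at 2. apply Rmult_le_compat_r; auto.
  apply Rmult_le_pos; auto.
Qed.

Lemma FE X Y q z : (Cmod q < 1)%R -> (Cmod (X * z) < 1)%R ->
  (1 - X * z) * Fs X Y q z = (1 - Y * z) * Fs X Y q (q * z).
Proof.
  intros Hq Hz.
  assert (Hz2 : (Cmod (X * (q * z)) < 1)%R).
  { pose proof (Cmod_qz X q z 1 Hq). simpl in H. rewrite Cmult_1_r in H. lra. }
  pose proof (F_correct X Y q z Hq Hz) as H1.
  pose proof (F_correct X Y q (q * z) Hq Hz2) as H2.
  pose proof (isC_minus _ _ _ _ H1 H2) as H3.
  apply isC_incr_1 in H3.
  pose proof (isC_minus _ _ _ _ (isC_scal X _ _ H1) (isC_scal Y _ _ H2)) as H4.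
  apply (isC_scal z) in H4.
  assert (E : forall k, z * (X * (cc X Y q k * z ^ k) - Y * (cc X Y q k * (q * z) ^ k)) =
     cc X Y q (S k) * z ^ S k - cc X Y q (S k) * (q * z) ^ S k).
  { intros k. rewrite !Cpow_mult_l.
    transitivity (cc X Y q (S k) * (1 - q * q ^ k) * (z * z ^ k)).
    2:{ simpl. ring. }
    rewrite cc_S by auto. ring. }
  apply (isC_ext _ _ _ E) in H4.
  pose proof (isC_unique _ _ _ H3 H4) as U.
  rewrite cc_0 in U. simpl in U.
  apply (Cmult_reg_l 1). intro E1. apply C1_nz. exact E1.
  transitivity (Fs X Y q z - Fs X Y q (q * z) - (1 * 1 - 1 * 1) - z * (X * Fs X Y q z - Y * Fs X Y q (q * z)) + 
     (1 - Y * z) * Fs X Y q (q * z)). ring.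
  rewrite U. ring.
Qed.

Lemma ITER X Y q z n : (Cmod q < 1)%R -> (Cmod (X * z) < 1)%R ->
  qpoch (X * z) q n * Fs X Y q z = qpoch (Y * z) q n * Fs X Y q (q ^ n * z).
Proof.
  intros Hq Hz. induction n.
  - simpl. rewrite !Cmult_1_l. reflexivity.
  - simpl qpoch.
    assert (Hw : (Cmod (X * (q ^ n * z)) < 1)%R) by (pose proof (Cmod_qz X q z n Hq); lra).
    pose proof (FE X Y q (q ^ n * z) Hq Hw) as HF.
    transitivity (qpoch (X * z) q n * Fs X Y q z * (1 - X * z * q ^ n)). ring.
    rewrite IHn.
    transitivity (qpoch (Y * z) q n * ((1 - X * (q ^ n * z)) * Fs X Y q (q ^ n * z))). ring.
    rewrite HF. replace (q * (q ^ n * z)) with (q ^ S n * z) by (simpl; ring). ring.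
Qed.

Lemma Cpow_pow_le1 (w : C) n : (Cmod w <= 1)%R -> (Cmod (w ^ S n) <= Cmod w)%R.
Proof.
  intros H. rewrite Cmod_pow. simpl. pose proof (Cmod_ge_0 w).
  assert (Cmod w ^ n <= 1)%R. { clear -H H0. induction n; simpl. lra. pose proof (pow_le (Cmod w) n H0). nra. }
  pose proof (pow_le (Cmod w) n H0). nra.
Qed.

Lemma NEAR1 X Y q z : (Cmod q < 1)%R -> (Cmod (X * z) < 1)%R ->
  Clim (fun n => Fs X Y q (q ^ n * z)) 1.
Proof.
  intros Hq Hz.
  assert (Hex : ex_series (fun j => Cmod (cc X Y q (S j) * z ^ S j))).
  { apply (ex_series_incr_1 (fun j => Cmod (cc X Y q j * z ^ j))). apply ABS; auto. }
  set (M := Series (fun j => Cmod (cc X Y q (S j) * z ^ S j))).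
  assert (HM : is_series (fun j => Cmod (cc X Y q (S j) * z ^ S j)) M) by (apply Series_correct; auto).
  apply (Clim_bound _ _ M (Cmod q)). split; [apply Cmod_ge_0|auto].
  intros n.
  assert (Hw : (Cmod (X * (q ^ n * z)) < 1)%R) by (pose proof (Cmod_qz X q z n Hq); lra).
  pose proof (F_correct X Y q (q ^ n * z) Hq Hw) as H1. apply isC_incr_1 in H1.
  rewrite cc_0 in H1. replace (1 * (q ^ n * z) ^ 0) with (RtoC 1) in H1 by (simpl; ring).
  rewrite <- (Cmod_pow q n). rewrite Rmult_comm.
  apply (NS _ (fun j => Cmod (q ^ n) * Cmod (cc X Y q (S j) * z ^ S j))%R _ _ H1).
  - intros j. rewrite Cpow_mult_l. 
    replace (cc X Y q (S j) * ((q ^ n) ^ S j * z ^ S j)) with ((q ^ n) ^ S j * (cc X Y q (S j) * z ^ S j)) by ring.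
    rewrite Cmod_mult. apply Rmult_le_compat_r. apply Cmod_ge_0. apply Cpow_pow_le1.
    apply Cmod_pow_le1; auto.
  - apply (is_series_scal (K:=R_AbsRing) (Cmod (q ^ n)) _ _ HM).
Qed.

Lemma F0 X Y q : Fs X Y q 0 = 1.
Proof.
  apply CSeries_correct. rewrite is_series_Clim.
  apply (Clim_ext_ev (fun _ => RtoC 1)). 2: apply Clim_const.
  exists O. intros n _. induction n. rewrite sumC_0. rewrite cc_0. simpl. ring.
  rewrite sumC_Sn, <- IHn. simpl. ring.
Qed.

Lemma EXIST a q : (Cmod q < 1)%R -> Clim (qpoch a q) (qpoch_inf a q).
Proof.
  intros Hq.
  assert (H01 : (Cmod (0 * 1) < 1)%R) by (rewrite Cmult_0_l, Cmod_0; lra).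
  pose proof (NEAR1 0 a q 1 Hq H01) as HN.
  assert (HL : Clim (qpoch a q) (Fs 0 a q 1)).
  { apply Clim_ext_ev with (u := fun n => Fs 0 a q 1 * / Fs 0 a q (q ^ n * 1)).
    - destruct (HN (1/2)%R ltac:(lra)) as [N HNN]. exists N. intros n Hn.
      specialize (HNN n Hn).
      assert (Hnz : Fs 0 a q (q ^ n * 1) <> 0).
      { intro E. rewrite E in HNN. replace (0 - 1) with (-(1)) in HNN by ring.
        rewrite Cmod_opp, Cmod_1 in HNN. lra. }
      pose proof (ITER 0 a q 1 n Hq H01) as HI.
      rewrite Cmult_0_l, qpoch_0, Cmult_1_r in HI.
      apply (Cmult_reg_l (Fs 0 a q (q ^ n * 1))); auto.
      rewrite Cmult_1_l in HI. rewrite HI. field. auto.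
    - assert (HC : Clim (fun n => Fs 0 a q 1 * / Fs 0 a q (q ^ n * 1)) (Fs 0 a q 1 * 1)).
      { apply Clim_scal. apply Clim_inv1. auto. }
      rewrite Cmult_1_r in HC. exact HC. }
  assert (E : qpoch_inf a q = Fs 0 a q 1) by (unfold qpoch_inf; apply lim_Clim; exact HL).
  rewrite E. exact HL.
Qed.

Lemma qinf0 q : qpoch_inf 0 q = 1.
Proof.
  unfold qpoch_inf. apply lim_Clim.
  apply (Clim_ext_ev (fun _ => RtoC 1)). exists O. intros n _. rewrite qpoch_0. auto.
  apply Clim_const.
Qed.

Lemma LI X Y q z : (Cmod q < 1)%R -> (Cmod (X * z) < 1)%R ->
  qpoch_inf (X * z) q * Fs X Y q z = qpoch_inf (Y * z) q.
Proof.
  intros Hq Hz.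
  assert (H1 : Clim (fun n => qpoch (X * z) q n * Fs X Y q z) (qpoch_inf (X * z) q * Fs X Y q z)).
  { apply Clim_mult. apply EXIST; auto. apply Clim_const. }
  assert (H2 : Clim (fun n => qpoch (Y * z) q n * Fs X Y q (q ^ n * z)) (qpoch_inf (Y * z) q * 1)).
  { apply Clim_mult. apply EXIST; auto. apply NEAR1; auto. }
  rewrite Cmult_1_r in H2.
  apply (Clim_unique (fun n => qpoch (X * z) q n * Fs X Y q z)); auto.
  apply (Clim_ext_ev _ _ _ (ex_intro _ O (fun n _ => eq_sym (ITER X Y q z n Hq Hz)))). auto.
Qed.

Lemma L1 X Y q z : (Cmod q < 1)%R -> (Cmod (X * z) < 1)%R ->
  qpoch_inf (X * z) q <> 0 /\
  is_series (fun j => cc X Y q j * z ^ j) (qpoch_inf (Y * z) q / qpoch_inf (X * z) q).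
Proof.
  intros Hq Hz.
  assert (Hnz : qpoch_inf (X * z) q <> 0).
  { pose proof (LI X 0 q z Hq Hz) as H. rewrite Cmult_0_l, qinf0 in H.
    intro E. rewrite E, Cmult_0_l in H. apply C1_nz. auto. }
  split; auto.
  replace (qpoch_inf (Y * z) q / qpoch_inf (X * z) q) with (Fs X Y q z).
  apply F_correct; auto.
  rewrite <- (LI X Y q z Hq Hz). field. auto.
Qed.


Lemma Cmod_le_ReIm (w : C) : (Cmod w <= Rabs (Re w) + Rabs (Im w))%R.
Proof.
  destruct w as [u v]. simpl.
  replace (u, v) with (RtoC u + RtoC v * Ci).
  2:{ unfold RtoC, Ci, Cplus, Cmult. simpl. f_equal; ring. }
  eapply Rle_trans. apply Cmod_triangle. rewrite Cmod_mult, Cmod_Ci, !Cmod_R. lra.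
Qed.

Lemma sum_Re (a : nat -> C) N : Re (sum_n a N) = sum_n (fun k => Re (a k)) N.
Proof.
  induction N. rewrite sumC_0, sum_O. reflexivity.
  rewrite sumC_Sn, sumR_Sn, <- IHN. reflexivity.
Qed.

Lemma sum_Im (a : nat -> C) N : Im (sum_n a N) = sum_n (fun k => Im (a k)) N.
Proof.
  induction N. rewrite sumC_0, sum_O. reflexivity.
  rewrite sumC_Sn, sumR_Sn, <- IHN. reflexivity.
Qed.

Lemma isC_split (a : nat -> C) (l : C) :
  is_series (fun k => Re (a k)) (Re l) -> is_series (fun k => Im (a k)) (Im l) -> is_series a l.
Proof.
  rewrite is_series_Clim, !is_series_Rlim. intros H1 H2 eps He.
  destruct (H1 (eps/2)%R ltac:(lra)) as [N1 HN1]. destruct (H2 (eps/2)%R ltac:(lra)) as [N2 HN2].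
  exists (max N1 N2). intros n Hn. specialize (HN1 n ltac:(lia)). specialize (HN2 n ltac:(lia)).
  eapply Rle_lt_trans. apply Cmod_le_ReIm.
  rewrite <- sum_Re, <- sum_Im in *.
  replace (Re (sum_n a n - l)) with (Re (sum_n a n) - Re l)%R by reflexivity.
  replace (Im (sum_n a n - l)) with (Im (sum_n a n) - Im l)%R by reflexivity.
  lra.
Qed.

Lemma isC_Re (a : nat -> C) (l : C) : is_series a l -> is_series (fun k => Re (a k)) (Re l).
Proof.
  rewrite is_series_Clim, !is_series_Rlim. intros H eps He. destruct (H eps He) as [N HN].
  exists N. intros n Hn. specialize (HN n Hn). rewrite <- sum_Re.
  replace (Re (sum_n a n) - Re l)%R with (Re (sum_n a n - l)) by reflexivity.
  eapply Rle_lt_trans. apply re_le_Cmod. auto.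
Qed.

Lemma isC_Im (a : nat -> C) (l : C) : is_series a l -> is_series (fun k => Im (a k)) (Im l).
Proof.
  rewrite is_series_Clim, !is_series_Rlim. intros H eps He. destruct (H eps He) as [N HN].
  exists N. intros n Hn. specialize (HN n Hn). rewrite <- sum_Im.
  replace (Im (sum_n a n) - Im l)%R with (Im (sum_n a n - l)) by reflexivity.
  eapply Rle_lt_trans. 2: apply HN. pose proof (Rmax_Cmod (sum_n a n - l)).
  pose proof (Rmax_r (Rabs (fst (sum_n a n - l))) (Rabs (snd (sum_n a n - l)))). unfold Im. lra.
Qed.

Lemma exR_Re (a : nat -> C) : ex_series (fun n => Cmod (a n)) -> ex_series (fun n => Rabs (Re (a n))).
Proof.
  intros H. apply (ex_series_le (K:=R_AbsRing) (V:=R_CompleteNormedModule) _ (fun n => Cmod (a n))); auto.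
  intros n. change (norm (Rabs (Re (a n)))) with (Rabs (Rabs (Re (a n)))). rewrite Rabs_Rabsolu.
  apply re_le_Cmod.
Qed.

Lemma exR_Im (a : nat -> C) : ex_series (fun n => Cmod (a n)) -> ex_series (fun n => Rabs (Im (a n))).
Proof.
  intros H. apply (ex_series_le (K:=R_AbsRing) (V:=R_CompleteNormedModule) _ (fun n => Cmod (a n))); auto.
  intros n. change (norm (Rabs (Im (a n)))) with (Rabs (Rabs (Im (a n)))). rewrite Rabs_Rabsolu.
  pose proof (Rmax_Cmod (a n)). pose proof (Rmax_r (Rabs (fst (a n))) (Rabs (snd (a n)))). unfold Im. lra.
Qed.

Lemma isR_minus (a b : nat -> R) la lb : is_series a la -> is_series b lb -> is_series (fun n => a n - b n)%R (la - lb)%R.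
Proof. intros Ha Hb. exact (is_series_minus a b la lb Ha Hb). Qed.
Lemma isR_plus (a b : nat -> R) la lb : is_series a la -> is_series b lb -> is_series (fun n => a n + b n)%R (la + lb)%R.
Proof. intros Ha Hb. exact (is_series_plus a b la lb Ha Hb). Qed.

Lemma sum_minusR (a b : nat -> R) N : @eq R (sum_n (fun k => a k - b k)%R N) (sum_n a N - sum_n b N)%R.
Proof. induction N. rewrite !sum_O. auto. rewrite !sumR_Sn, IHN. ring. Qed.
Lemma sum_plusR (a b : nat -> R) N : @eq R (sum_n (fun k => a k + b k)%R N) (sum_n a N + sum_n b N)%R.
Proof. induction N. rewrite !sum_O. auto. rewrite !sumR_Sn, IHN. ring. Qed.

Lemma CP (a b : nat -> C) la lb : is_series a la -> is_series b lb ->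
  ex_series (fun n => Cmod (a n)) -> ex_series (fun n => Cmod (b n)) ->
  is_series (fun n => sum_n (fun k => a k * b (n - k)%nat) n) (la * lb).
Proof.
  intros Ha Hb Aa Ab.
  pose proof (isC_Re _ _ Ha) as Ha1. pose proof (isC_Im _ _ Ha) as Ha2.
  pose proof (isC_Re _ _ Hb) as Hb1. pose proof (isC_Im _ _ Hb) as Hb2.
  pose proof (exR_Re _ Aa) as Aa1. pose proof (exR_Im _ Aa) as Aa2.
  pose proof (exR_Re _ Ab) as Ab1. pose proof (exR_Im _ Ab) as Ab2.
  pose proof (is_series_mult _ _ _ _ Ha1 Hb1 Aa1 Ab1) as P11.
  pose proof (is_series_mult _ _ _ _ Ha2 Hb2 Aa2 Ab2) as P22.
  pose proof (is_series_mult _ _ _ _ Ha1 Hb2 Aa1 Ab2) as P12.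
  pose proof (is_series_mult _ _ _ _ Ha2 Hb1 Aa2 Ab1) as P21.
  apply isC_split.
  - pose proof (isR_minus _ _ _ _ P11 P22) as H.
    replace (Re (la * lb)) with (Re la * Re lb - Im la * Im lb)%R by (destruct la as [p1 p2]; destruct lb as [p3 p4]; unfold Cmult, Re, Im; simpl; ring).
    revert H. apply is_series_ext. intros n. cbv beta.
    rewrite sum_Re, <- !sum_n_Reals, <- sum_minusR. apply sum_n_ext. intros k. destruct (a k) as [u1 u2], (b (n-k)%nat) as [v1 v2]. unfold Cmult, Re, Im. simpl. ring.
  - pose proof (isR_plus _ _ _ _ P12 P21) as H.
    replace (Im (la * lb)) with (Re la * Im lb + Im la * Re lb)%R by (destruct la as [p1 p2]; destruct lb as [p3 p4]; unfold Cmult, Re, Im; simpl; ring).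
    revert H. apply is_series_ext. intros n. cbv beta.
    rewrite sum_Im, <- !sum_n_Reals, <- sum_plusR. apply sum_n_ext. intros k. destruct (a k) as [u1 u2], (b (n-k)%nat) as [v1 v2]. unfold Cmult, Re, Im. simpl. ring.
Qed.


Lemma L2 a q k : (Cmod q < 1)%R -> qpoch_inf a q = qpoch a q k * qpoch_inf (a * q ^ k) q.
Proof.
  intros Hq. apply (Clim_unique (fun n => qpoch a q (k + n))).
  - apply Clim_shift. apply EXIST; auto.
  - apply (Clim_ext_ev (fun n => qpoch a q k * qpoch (a * q ^ k) q n)).
    exists O. intros n _. rewrite qpoch_add. auto.
    apply Clim_scal. apply EXIST; auto.
Qed.

Lemma isC_sum_fin (c : nat -> C) (u : nat -> nat -> C) (L : nat -> C) N :
  (forall k, is_series (u k) (L k)) ->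
  is_series (fun m => sum_n (fun k => c k * u k m) N) (sum_n (fun k => c k * L k) N).
Proof.
  intros H. induction N.
  - rewrite sumC_0. apply (isC_ext (fun m => c O * u O m)). intros m. rewrite sumC_0. auto.
    apply isC_scal. auto.
  - rewrite sumC_Sn. apply (isC_ext (fun m => sum_n (fun k => c k * u k m) N + c (S N) * u (S N) m)).
    intros m. rewrite sumC_Sn. auto.
    apply isC_plus; auto. apply isC_scal. auto.
Qed.

Lemma isC_zero : is_series (fun _ : nat => RtoC 0) (RtoC 0).
Proof.
  rewrite is_series_Clim. apply (Clim_ext_ev (fun _ => RtoC 0)). 2: apply Clim_const.
  exists O. intros n _. induction n. rewrite sumC_0. auto. rewrite sumC_Sn, <- IHn. ring.
Qed.

Lemma gg_cauchy X Y q s m : (Cmod q < 1)%R ->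
  gg X Y q m * s ^ m = sum_n (fun j => (cc X Y q j * s ^ j) * (cc 1 0 q (m - j) * s ^ (m - j))) m.
Proof.
  intros Hq. unfold gg. rewrite Cmult_comm, sumC_scal_l. apply sumC_ext_loc. intros j Hj.
  rewrite cc_1_0. replace (s ^ m) with (s ^ j * s ^ (m - j)) by (rewrite <- Cpow_add_r; f_equal; lia). ring.
Qed.

Theorem theorem3p1 (q x y s t : C) :
  (Cmod q < 1)%R -> (Cmod t < 1)%R -> (Cmod s < 1)%R ->
  (Cmod (x * t) < 1)%R -> (Cmod (x * s) < 1)%R ->
  (forall k : nat, y * s * Cpow q k <> 1) ->
  exists S : nat -> C,
    (forall n : nat,
       is_series (fun m : nat =>
         hn x y q (n + m) * (Cpow t n / qpoch q q n) * (Cpow s m / qpoch q q m))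
         (S n)) /\
    is_series S
      (qpoch_inf (y * s) q
         / (qpoch_inf s q * qpoch_inf (x * s) q * qpoch_inf (x * t) q)
         * phi21 y (x * s) (y * s) q t).
Proof.
  intros Hq Ht Hs Hxt Hxs Hys.
  assert (Hs1 : (Cmod (1 * s) < 1)%R) by (rewrite Cmult_1_l; auto).
  destruct (L1 1 0 q s Hq Hs1) as [Hsnz Hser_s].
  rewrite Cmult_0_l, qinf0, Cmult_1_l in Hser_s. rewrite Cmult_1_l in Hsnz.
  assert (Hxt1 : (Cmod (1 * (x * t)) < 1)%R) by (rewrite Cmult_1_l; auto).
  destruct (L1 1 0 q (x * t) Hq Hxt1) as [Hxtnz Hser_xt].
  rewrite Cmult_0_l, qinf0, Cmult_1_l in Hser_xt. rewrite Cmult_1_l in Hxtnz.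
  destruct (L1 x 0 q s Hq Hxs) as [Hxsnz _].
  assert (Hk : forall k, (Cmod (x * q ^ k * s) < 1)%R).
  { intros k. replace (x * q ^ k * s) with (x * (q ^ k * s)) by ring.
    pose proof (Cmod_qz x q s k Hq). lra. }
  pose (T := fun k => qpoch_inf (y * q ^ k * s) q / qpoch_inf (x * q ^ k * s) q * (1 / qpoch_inf s q)).
  assert (HT : forall k, is_series (fun m => gg (x * q ^ k) (y * q ^ k) q m * s ^ m) (T k)).
  { intros k. destruct (L1 (x * q ^ k) (y * q ^ k) q s Hq (Hk k)) as [_ H1].
    apply (isC_ext (fun m => sum_n (fun j => (cc (x * q ^ k) (y * q ^ k) q j * s ^ j) * (cc 1 0 q (m - j) * s ^ (m - j))) m)).
    { intros m. symmetry. apply gg_cauchy. auto. }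
    unfold T. apply (CP _ _ _ _ H1 Hser_s). apply ABS; auto. apply ABS; auto. }
  pose (aa := fun k => cc 1 y q k * t ^ k * T k).
  pose (bb := fun l => cc 1 0 q l * (x * t) ^ l).
  pose (S := fun n => sum_n (fun k => aa k * bb (n - k)%nat) n).
  exists S. split.
  - intros n.
    apply (isC_ext (fun m => sum_n (fun k => (t ^ n * BB x y q n k) * (gg (x * q ^ k) (y * q ^ k) q m * s ^ m)) n)).
    { intros m.
      assert (H1 := qqpoch_nz q n Hq). assert (H2 := qqpoch_nz q m Hq).
      transitivity (t ^ n * s ^ m * (hn x y q (n + m) / (qpoch q q n * qpoch q q m))).
      2:{ field. auto. }
      rewrite FI by auto. rewrite sumC_scal_l. apply sumC_ext_loc. intros k _. ring. }
    replace (S n) with (sum_n (fun k => (t ^ n * BB x y q n k) * T k) n).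
    { apply isC_sum_fin. exact HT. }
    unfold S. apply sumC_ext_loc. intros k Hkn. unfold aa, bb.
    rewrite cc_1_0. unfold cc, dd, BB. rewrite Pn_1. rewrite Cpow_mult_l.
    replace (t ^ n) with (t ^ k * t ^ (n - k)) by (rewrite <- Cpow_add_r; f_equal; lia).
    assert (H1 := qqpoch_nz q k Hq). assert (H2 := qqpoch_nz q (n - k) Hq).
    field. auto.
  - assert (Hbb : is_series bb (1 / qpoch_inf (x * t) q)) by exact Hser_xt.
    assert (Abb : ex_series (fun l => Cmod (bb l))) by (apply ABS; auto).
    assert (Hex0 := ABS x y q s Hq Hxs).
    pose (M0 := Series (fun j => Cmod (cc x y q j * s ^ j))).
    assert (HM0 : is_series (fun j => Cmod (cc x y q j * s ^ j)) M0) by (apply Series_correct; auto).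
    assert (HTb : forall k, (Cmod (T k) <= M0 * Cmod (1 / qpoch_inf s q))%R).
    { intros k. destruct (L1 (x * q ^ k) (y * q ^ k) q s Hq (Hk k)) as [_ H1].
      unfold T. rewrite Cmod_mult. apply Rmult_le_compat_r. apply Cmod_ge_0.
      apply (NS _ (fun j => Cmod (cc x y q j * s ^ j)) _ _ H1); auto.
      intros j. rewrite cc_scale.
      replace ((q ^ k) ^ j * cc x y q j * s ^ j) with ((q ^ k) ^ j * (cc x y q j * s ^ j)) by ring.
      rewrite Cmod_mult. pose proof (Cmod_ge_0 (cc x y q j * s ^ j)).
      assert (Cmod ((q ^ k) ^ j) <= 1)%R.
      { rewrite <- Cpow_mult_r. apply Cmod_pow_le1; auto. }
      nra. }
    assert (Aaa : ex_series (fun k => Cmod (aa k))).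
    { apply (ex_series_le (K:=R_AbsRing) (V:=R_CompleteNormedModule) _
        (fun k => Cmod (cc 1 y q k * t ^ k) * (M0 * Cmod (1 / qpoch_inf s q)))%R).
      - intros k. change (norm (Cmod (aa k))) with (Rabs (Cmod (aa k))).
        rewrite Rabs_pos_eq by apply Cmod_ge_0. unfold aa. rewrite Cmod_mult.
        apply Rmult_le_compat_l. apply Cmod_ge_0. apply HTb.
      - apply ex_series_scal_r. apply ABS; auto. rewrite Cmult_1_l; auto. }
    destruct (exC_abs _ Aaa) as [LA HLA].
    pose proof (CP _ _ _ _ HLA Hbb Aaa Abb) as HCP.
    assert (Hysk : forall k, qpoch (y * s) q k <> 0).
    { intros k. apply qpoch_nz. intros j E. apply (Hys j).
      transitivity (1 - (1 - y * s * q ^ j)). ring. rewrite E. ring. }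
    assert (Hxsk : forall k, qpoch (x * s) q k <> 0) by (intros; apply qpoch_nz_small; auto).
    pose (K := qpoch_inf (y * s) q / (qpoch_inf s q * qpoch_inf (x * s) q)).
    pose (w := fun n => (qpoch y q n * qpoch (x * s) q n) / (qpoch q q n * qpoch (y * s) q n) * t ^ n).
    assert (Haw : forall k, aa k = K * w k).
    { intros k.
      assert (E1 : qpoch_inf (y * q ^ k * s) q = qpoch_inf (y * s) q / qpoch (y * s) q k).
      { rewrite (L2 (y * s) q k Hq). replace (y * s * q ^ k) with (y * q ^ k * s) by ring.
        field. auto. }
      assert (E2 : qpoch_inf (x * q ^ k * s) q = qpoch_inf (x * s) q / qpoch (x * s) q k).
      { rewrite (L2 (x * s) q k Hq). replace (x * s * q ^ k) with (x * q ^ k * s) by ring.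
        field. auto. }
      unfold aa, T, K, w. rewrite E1, E2. unfold cc. rewrite Pn_1.
      assert (H1 := qqpoch_nz q k Hq). assert (H2 := Hysk k). assert (H3 := Hxsk k).
      field. auto. }
    destruct (Ceq_dec (qpoch_inf (y * s) q) 0) as [Z|NZ].
    + assert (HA0 : LA = RtoC 0).
      { apply (isC_unique aa); auto. apply (isC_ext (fun _ => RtoC 0)). intros k. rewrite Haw.
        unfold K. rewrite Z. unfold Cdiv. ring. apply isC_zero. }
      rewrite Z. rewrite HA0 in HCP.
      replace (0 / (qpoch_inf s q * qpoch_inf (x * s) q * qpoch_inf (x * t) q) * phi21 y (x * s) (y * s) q t)
        with (RtoC 0 * (1 / qpoch_inf (x * t) q)) by (unfold Cdiv; ring).
      exact HCP.
    + assert (HKnz : K <> 0).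
      { unfold K. unfold Cdiv. apply Cmult_neq_0; auto. assert (Hinv : forall c : C, c <> 0 -> / c <> 0).
        { intros c Hc E. apply C1_nz. rewrite <- (Cinv_r c Hc), E. ring. }
        apply Hinv. apply Cmult_neq_0; auto. }
      assert (Hw : is_series w (LA / K)).
      { apply (isC_ext (fun k => / K * aa k)). intros k. rewrite Haw. field. auto.
        unfold Cdiv. rewrite Cmult_comm. apply isC_scal. auto. }
      assert (Hphi : phi21 y (x * s) (y * s) q t = LA / K).
      { unfold phi21. apply CSeries_correct. exact Hw. }
      rewrite Hphi.
      replace (qpoch_inf (y * s) q / (qpoch_inf s q * qpoch_inf (x * s) q * qpoch_inf (x * t) q) * (LA / K))
        with (LA * (1 / qpoch_inf (x * t) q)).
      exact HCP.
      unfold K. field. repeat split; auto.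
Qed.
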